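(* Let $\boldsymbol{x}\in\mathbb{T}^3$ and $\boldsymbol{v}\in\mathbb{S}^2$, and for $\underline{\omega}=(\omega_1,\omega_2,\dots)$ with $\omega_i\in\Omega_0$ define $\boldsymbol{x}_0=\boldsymbol{x}$, $\boldsymbol{v}_0=\boldsymbol{v}$ and recursively $\boldsymbol{x}_n=f_{\omega_n}(\boldsymbol{x}_{n-1})$, $\boldsymbol{v}_n=\dfrac{D_{\boldsymbol{x}_{n-1}}f_{\omega_n}\boldsymbol{v}_{n-1}}{|D_{\boldsymbol{x}_{n-1}}f_{\omega_n}\boldsymbol{v}_{n-1}|}$. Then: (1) there exist $N_1\in\mathbb{N}$ and $(\omega_1,\dots,\omega_{N_1})\in\Omega_0^{N_1}$ such that $\boldsymbol{v}_{N_1}=(1,0,0)$; (2) if $\boldsymbol{v}=(1,0,0)$, then for any $\overline{\boldsymbol{v}}\in\mathbb{S}^2$ there exist $N_2\in\mathbb{N}$ and $(\omega_1,\dots,\omega_{N_2})\in\Omega_0^{N_2}$ such that $\boldsymbol{v}_{N_2}=\overline{\boldsymbol{v}}$.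
   Context: $\mathbb{T}^3=\mathbb{R}^3/(2\pi\mathbb{Z})^3$ with points $\boldsymbol{x}=(x,y,z)$; $\mathbb{S}^2$ is the unit sphere in $\mathbb{R}^3$. Fix $U>0$ and let $\Omega_0=[-U,U]^3\times[0,2\pi)^3$, with elements $\omega=(\mathsf{A},\mathsf{B},\mathsf{C},\alpha,\beta,\gamma)$. Define maps of $\mathbb{T}^3$: $f_{(\mathsf{A},\alpha)}(x,y,z)=(x+\mathsf{A}\sin(z+\alpha),\ y+\mathsf{A}\cos(z+\alpha),\ z)$, $f_{(\mathsf{B},\beta)}(x,y,z)=(x,\ y+\mathsf{B}\sin(x+\beta),\ z+\mathsf{B}\cos(x+\beta))$, $f_{(\mathsf{C},\gamma)}(x,y,z)=(x+\mathsf{C}\cos(y+\gamma),\ y,\ z+\mathsf{C}\sin(y+\gamma))$, and $f_\omega=f_{(\mathsf{C},\gamma)}\circ f_{(\mathsf{B},\beta)}\circ f_{(\mathsf{A},\alpha)}$; $D_{\boldsymbol{x}}f_\omega$ is the Jacobian matrix of $f_\omega$ at $\boldsymbol{x}$. *)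

(* Defs.v *)
From Stdlib Require Import Reals List.
From Coquelicot Require Import Coquelicot.
Open Scope R_scope.

(* Points of R^3 (lifts of points of T^3) and tangent vectors. *)
Definition vec : Type := (R * R * R)%type.

Definition coord (i : nat) (p : vec) : R :=
  match p with (a, b, c) => match i with 0%nat => a | 1%nat => b | _ => c end end.

Definition vadd (p q : vec) : vec :=
  (coord 0 p + coord 0 q, coord 1 p + coord 1 q, coord 2 p + coord 2 q).
Definition vscale (t : R) (p : vec) : vec :=
  (t * coord 0 p, t * coord 1 p, t * coord 2 p).

Definition ej (j : nat) : vec :=
  match j with 0%nat => (1, 0, 0) | 1%nat => (0, 1, 0) | _ => (0, 0, 1) end.

Definition norm3 (v : vec) : R :=
  sqrt (coord 0 v ^ 2 + coord 1 v ^ 2 + coord 2 v ^ 2).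

Definition normalize (v : vec) : vec := vscale (/ norm3 v) v.

Definition jac (f : vec -> vec) (p : vec) (i j : nat) : R :=
  Derive (fun t => coord i (f (vadd p (vscale t (ej j))))) 0.

Definition jac_apply (f : vec -> vec) (p v : vec) : vec :=
  let row i := jac f p i 0 * coord 0 v + jac f p i 1 * coord 1 v
               + jac f p i 2 * coord 2 v in
  (row 0%nat, row 1%nat, row 2%nat).

Record omega : Type := mkOmega
  { oA : R; oB : R; oC : R; oal : R; obe : R; oga : R }.

Definition in_Omega0 (U : R) (w : omega) : Prop :=
  -U <= oA w <= U /\ -U <= oB w <= U /\ -U <= oC w <= U /\
  0 <= oal w < 2 * PI /\ 0 <= obe w < 2 * PI /\ 0 <= oga w < 2 * PI.

Definition fA (A al : R) (p : vec) : vec :=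
  match p with (x, y, z) => (x + A * sin (z + al), y + A * cos (z + al), z) end.
Definition fB (B be : R) (p : vec) : vec :=
  match p with (x, y, z) => (x, y + B * sin (x + be), z + B * cos (x + be)) end.
Definition fC (C ga : R) (p : vec) : vec :=
  match p with (x, y, z) => (x + C * cos (y + ga), y, z + C * sin (y + ga)) end.

Definition f_omega (w : omega) (p : vec) : vec :=
  fC (oC w) (oga w) (fB (oB w) (obe w) (fA (oA w) (oal w) p)).

Definition step (w : omega) (s : vec * vec) : vec * vec :=
  (f_omega w (fst s), normalize (jac_apply (f_omega w) (fst s) (snd s))).

Definition run (ws : list omega) (s : vec * vec) : vec * vec :=
  fold_left (fun s w => step w s) ws s.

(* Main.v *)
Require Import Defs.
From Stdlib Require Import Reals List.
From Stdlib Require Import Lra Lia ZArith FunctionalExtensionality.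
From Coquelicot Require Import Coquelicot.
Import Stdlib.Lists.List.
Open Scope R_scope.

Definition omA (a al : R) := mkOmega a 0 0 al 0 0.
Definition omB (b be : R) := mkOmega 0 b 0 0 be 0.
Definition omC (c ga : R) := mkOmega 0 0 c 0 0 ga.

Lemma fomA a al : f_omega (omA a al) = fA a al.
Proof.
  apply functional_extensionality; intros [[x y] z].
  unfold f_omega, omA, fA, fB, fC; simpl. rewrite !Rmult_0_l, !Rplus_0_r. reflexivity.
Qed.
Lemma fomB b be : f_omega (omB b be) = fB b be.
Proof.
  apply functional_extensionality; intros [[x y] z].
  unfold f_omega, omB, fA, fB, fC; simpl. rewrite !Rmult_0_l, !Rplus_0_r. reflexivity.
Qed.
Lemma fomC c ga : f_omega (omC c ga) = fC c ga.
Proof.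
  apply functional_extensionality; intros [[x y] z].
  unfold f_omega, omC, fA, fB, fC; simpl. rewrite !Rmult_0_l, !Rplus_0_r. reflexivity.
Qed.

Ltac derive_all :=
  repeat match goal with |- context [Derive ?f 0] =>
    let H := fresh in
    let l := fresh "l" in
    evar (l : R);
    assert (H : is_derive f 0 l) by (subst l; auto_derive; [exact I| reflexivity]);
    rewrite (is_derive_unique f 0 l H); subst l; clear H end;
  rewrite ?Rmult_0_l, ?Rmult_1_l, ?Rmult_0_r, ?Rmult_1_r, ?Rplus_0_r, ?Rplus_0_l;
  f_equal; [f_equal|]; ring.

Lemma jacA a al x y z u1 u2 u3 :
  jac_apply (fA a al) (x,y,z) (u1,u2,u3) =
   (u1 + a * cos (z + al) * u3, u2 - a * sin (z + al) * u3, u3).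
Proof. unfold jac_apply, jac; simpl. derive_all. Qed.

Lemma jacB b be x y z u1 u2 u3 :
  jac_apply (fB b be) (x,y,z) (u1,u2,u3) =
   (u1, u2 + b * cos (x+be) * u1, u3 - b * sin (x + be) * u1).
Proof. unfold jac_apply, jac; simpl. derive_all. Qed.

Lemma jacC c ga x y z u1 u2 u3 :
  jac_apply (fC c ga) (x,y,z) (u1,u2,u3) =
   (u1 - c * sin (y + ga) * u2, u2, u3 + c * cos (y + ga) * u2).
Proof. unfold jac_apply, jac; simpl. derive_all. Qed.

Lemma norm3_zero a b c : norm3 (a,b,c) = 0 -> a = 0 /\ b = 0 /\ c = 0.
Proof.
  unfold norm3; simpl; intro H.
  apply sqrt_eq_0 in H; [|nra]. nra.
Qed.

Lemma norm3_sq a b c : norm3 (a,b,c) = 1 -> a^2 + b^2 + c^2 = 1.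
Proof.
  unfold norm3; cbn [coord]; intro H.
  assert (H0 : 0 <= a^2 + b^2 + c^2) by nra.
  pose proof (sqrt_sqrt _ H0) as E. rewrite H in E. lra.
Qed.

Lemma norm3_vscale c u : 0 < c -> norm3 (vscale c u) = c * norm3 u.
Proof.
  intro Hc; destruct u as [[a b] d]; unfold norm3, vscale; cbn [coord].
  replace ((c*a)^2 + (c*b)^2 + (c*d)^2) with ((c*c) * (a^2+b^2+d^2)) by ring.
  rewrite sqrt_mult by nra. rewrite sqrt_square by lra. reflexivity.
Qed.

Lemma normalize_scale c u : 0 < c -> normalize (vscale c u) = normalize u.
Proof.
  intro Hc. destruct (Req_dec (norm3 u) 0) as [H0|H0].
  - destruct u as [[a b] d]. apply norm3_zero in H0 as (-> & -> & ->).
    unfold normalize, vscale; simpl. f_equal; [f_equal|]; ring.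
  - unfold normalize. rewrite norm3_vscale by exact Hc.
    destruct u as [[a b] d]; unfold vscale; simpl. f_equal; [f_equal|]; field; lra.
Qed.

Lemma normalize_pos u : exists c, 0 < c /\ normalize u = vscale c u.
Proof.
  destruct (Req_dec (norm3 u) 0) as [H0|H0].
  - exists 1; split; [lra|]. destruct u as [[a b] d].
    apply norm3_zero in H0 as (-> & -> & ->).
    unfold normalize, vscale; simpl. f_equal; [f_equal|]; ring.
  - exists (/ norm3 u); split; [|reflexivity].
    apply Rinv_0_lt_compat. unfold norm3 in *.
    pose proof (sqrt_pos (coord 0 u ^ 2 + coord 1 u ^ 2 + coord 2 u ^ 2)). lra.
Qed.

Lemma normalize_unit v : norm3 v = 1 -> normalize v = v.
Proof.
  intro H; unfold normalize; rewrite H, Rinv_1.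
  destruct v as [[a b] d]; unfold vscale; simpl; f_equal; [f_equal|]; ring.
Qed.

Lemma run_app ws1 ws2 s : run (ws1 ++ ws2) s = run ws2 (run ws1 s).
Proof. unfold run. apply fold_left_app. Qed.

Lemma Forall_repeat {A} (P : A -> Prop) (a : A) n : P a -> Forall P (repeat a n).
Proof. intro H; induction n; simpl; constructor; auto. Qed.

Lemma repeat_gen (w : omega) (P : vec -> Prop) (g : R -> vec -> vec) :
  (forall p, P p -> P (f_omega w p)) ->
  (forall p u, P p -> jac_apply (f_omega w) p u = g 1 u) ->
  (forall u, g 0 u = u) ->
  (forall t t' u, g t (g t' u) = g (t + t') u) ->
  (forall t c u, g t (vscale c u) = vscale c (g t u)) ->
  forall n p u, P p -> exists p', P p' /\
    run (repeat w n) (p, normalize u) = (p', normalize (g (INR n) u)).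
Proof.
  intros HP Hj H0 Hadd Hlin n. induction n as [|n IH]; intros p u Hp.
  - exists p; split; auto. simpl. rewrite H0. reflexivity.
  - simpl repeat. change (run (w :: repeat w n) (p, normalize u))
      with (run (repeat w n) (step w (p, normalize u))).
    unfold step; simpl fst; simpl snd.
    destruct (normalize_pos u) as [c [Hc Hn]]. rewrite Hn, Hj by exact Hp.
    rewrite Hlin, normalize_scale by exact Hc.
    destruct (IH (f_omega w p) (g 1 u) (HP p Hp)) as [p' [Hp' E]].
    exists p'; split; auto. rewrite E, Hadd, S_INR. replace (INR n + 1) with (1 + INR n) by ring. reflexivity.
Qed.

Lemma cos_sin_Z th z :
  cos (th + 2 * IZR z * PI) = cos th /\ sin (th + 2 * IZR z * PI) = sin th.
Proof.
  destruct (Z.le_ge_cases 0 z) as [Hz|Hz].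
  - rewrite <- (Z2Nat.id z Hz), <- INR_IZR_INZ.
    split; [apply cos_period | apply sin_period].
  - assert (E : z = (- Z.of_nat (Z.to_nat (- z)))%Z) by lia.
    rewrite E, opp_IZR, <- INR_IZR_INZ.
    set (t := th + 2 * - INR (Z.to_nat (- z)) * PI).
    replace th with (t + 2 * INR (Z.to_nat (- z)) * PI) at 1 2 by (unfold t; ring).
    rewrite cos_period, sin_period. split; reflexivity.
Qed.

Lemma phase x0 th : exists ph, 0 <= ph < 2 * PI /\
  cos (x0 + ph) = cos th /\ sin (x0 + ph) = sin th.
Proof.
  pose proof PI_RGT_0 as HPI.
  set (r := (th - x0) / (2 * PI)).
  destruct (archimed r) as [H1 H2].
  exists (th - x0 - 2 * PI * (IZR (up r) - 1)).
  assert (Er : th - x0 = 2 * PI * r) by (unfold r; field; lra).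
  split; [split|].
  - rewrite Er. nra.
  - rewrite Er. nra.
  - replace (x0 + (th - x0 - 2 * PI * (IZR (up r) - 1)))
      with (th + 2 * IZR (1 - up r) * PI) by (rewrite minus_IZR; ring).
    apply cos_sin_Z.
Qed.

Lemma big_nat U w : 0 < U -> exists n : nat, 0 < INR n /\ Rabs w < INR n * U.
Proof.
  intro HU. destruct (archimed (Rabs w / U)) as [H1 _].
  assert (H0 : 0 <= Rabs w / U) by (apply Rdiv_le_0_compat; [apply Rabs_pos|lra]).
  assert (Hz : (0 <= up (Rabs w / U))%Z) by (apply le_IZR; lra).
  exists (Z.to_nat (up (Rabs w / U))).
  rewrite INR_IZR_INZ, Z2Nat.id by exact Hz. split; [lra|].
  apply Rmult_lt_compat_r with (r := U) in H1; [|lra].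
  unfold Rdiv in H1. rewrite Rmult_assoc, Rinv_l, Rmult_1_r in H1 by lra. lra.
Qed.

Definition reach (U : R) (u u' : vec) : Prop :=
  forall p, exists ws, Forall (in_Omega0 U) ws /\
    exists p', run ws (p, normalize u) = (p', normalize u').

Lemma move_gen U (HU : 0 < U) (k : nat) (mk : R -> R -> omega)
  (g : R -> vec -> vec) th :
  (forall s ph, -U <= s <= U -> 0 <= ph < 2 * PI -> in_Omega0 U (mk s ph)) ->
  (forall s ph p, coord k (f_omega (mk s ph) p) = coord k p) ->
  (forall s ph p u, cos (coord k p + ph) = cos th -> sin (coord k p + ph) = sin th ->
      jac_apply (f_omega (mk s ph)) p u = g s u) ->
  (forall u, g 0 u = u) ->
  (forall t t' u, g t (g t' u) = g (t + t') u) ->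
  (forall t c u, g t (vscale c u) = vscale c (g t u)) ->
  forall w u, reach U u (g w u).
Proof.
  intros Hin Hk Hj H0 Hadd Hlin w u p.
  destruct (phase (coord k p) th) as [ph [Hph [Hc Hs]]].
  destruct (big_nat U w HU) as [n [Hn Hw]].
  set (s := w / INR n).
  assert (Hsn : INR n * s = w) by (unfold s; field; lra).
  assert (Hs_b : -U <= s <= U).
  { apply Rabs_def2 in Hw. rewrite <- Hsn in Hw. destruct Hw. split; nra. }
  exists (repeat (mk s ph) n). split.
  - apply Forall_repeat. apply Hin; auto.
  - destruct (repeat_gen (mk s ph) (fun q => coord k q = coord k p) (fun t => g (t * s)))
      with (n := n) (p := p) (u := u) as [p' [_ E]].
    + intros q Hq. rewrite Hk. exact Hq.
    + intros q v Hq. rewrite Rmult_1_l. apply Hj; rewrite Hq; assumption.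
    + intro v. rewrite Rmult_0_l. apply H0.
    + intros t t' v. rewrite Hadd. f_equal. ring.
    + intros t c v. apply Hlin.
    + reflexivity.
    + exists p'. rewrite E, Hsn. reflexivity.
Qed.

Lemma triple_eq (a b c a' b' c' : R) : a = a' -> b = b' -> c = c' -> ((a,b,c) : vec) = (a',b',c').
Proof. intros -> -> ->; reflexivity. Qed.

Definition gA t (u : vec) : vec := (coord 0 u + t * coord 2 u, coord 1 u, coord 2 u).
Definition gBy t (u : vec) : vec := (coord 0 u, coord 1 u + t * coord 0 u, coord 2 u).
Definition gBz t (u : vec) : vec := (coord 0 u, coord 1 u, coord 2 u + t * coord 0 u).
Definition gC t (u : vec) : vec := (coord 0 u - t * coord 1 u, coord 1 u, coord 2 u).

Ltac vec_ring := repeat match goal with u : vec |- _ => destruct u as [[? ?] ?] end;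
  unfold gA, gBy, gBz, gC, vscale; cbn [coord]; apply triple_eq; ring.

Ltac in_om := intros s ph Hs Hph; pose proof PI_RGT_0;
  unfold in_Omega0, omA, omB, omC; cbn [oA oB oC oal obe oga]; repeat split; lra.

Lemma moveA U (HU : 0 < U) w u : reach U u (gA w u).
Proof.
  apply (move_gen U HU 2 omA gA 0).
  - in_om.
  - intros s ph [[x y] z]. rewrite fomA. reflexivity.
  - intros s ph [[x y] z] [[u1 u2] u3] Hc Hs. rewrite fomA, jacA.
    cbn [coord] in Hc, Hs. rewrite Hc, Hs, cos_0, sin_0. unfold gA; cbn [coord].
    apply triple_eq; ring.
  - intros; vec_ring.
  - intros; vec_ring.
  - intros; vec_ring.
Qed.

Lemma moveBy U (HU : 0 < U) w u : reach U u (gBy w u).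
Proof.
  apply (move_gen U HU 0 omB gBy 0).
  - in_om.
  - intros s ph [[x y] z]. rewrite fomB. reflexivity.
  - intros s ph [[x y] z] [[u1 u2] u3] Hc Hs. rewrite fomB, jacB.
    cbn [coord] in Hc, Hs. rewrite Hc, Hs, cos_0, sin_0. unfold gBy; cbn [coord].
    apply triple_eq; ring.
  - intros; vec_ring.
  - intros; vec_ring.
  - intros; vec_ring.
Qed.

Lemma moveBz U (HU : 0 < U) w u : reach U u (gBz w u).
Proof.
  replace w with (- - w) by ring.
  apply (move_gen U HU 0 omB (fun t => gBz (- t)) (PI / 2)).
  - in_om.
  - intros s ph [[x y] z]. rewrite fomB. reflexivity.
  - intros s ph [[x y] z] [[u1 u2] u3] Hc Hs. rewrite fomB, jacB.
    cbn [coord] in Hc, Hs. rewrite Hc, Hs, cos_PI2, sin_PI2. unfold gBz; cbn [coord].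
    apply triple_eq; ring.
  - intros; vec_ring.
  - intros; vec_ring.
  - intros; vec_ring.
Qed.

Lemma moveC U (HU : 0 < U) w u : reach U u (gC w u).
Proof.
  apply (move_gen U HU 1 omC gC (PI / 2)).
  - in_om.
  - intros s ph [[x y] z]. rewrite fomC. reflexivity.
  - intros s ph [[x y] z] [[u1 u2] u3] Hc Hs. rewrite fomC, jacC.
    cbn [coord] in Hc, Hs. rewrite Hc, Hs, cos_PI2, sin_PI2. unfold gC; cbn [coord].
    apply triple_eq; ring.
  - intros; vec_ring.
  - intros; vec_ring.
  - intros; vec_ring.
Qed.

Lemma reach_refl U u : reach U u u.
Proof. intro p. exists nil. split; [constructor|]. exists p. reflexivity. Qed.

Lemma reach_trans U u1 u2 u3 : reach U u1 u2 -> reach U u2 u3 -> reach U u1 u3.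
Proof.
  intros H1 H2 p. destruct (H1 p) as [ws1 [F1 [p1 E1]]].
  destruct (H2 p1) as [ws2 [F2 [p2 E2]]].
  exists (ws1 ++ ws2). split; [apply Forall_app; auto|].
  exists p2. rewrite run_app, E1, E2. reflexivity.
Qed.

Lemma reach_eq U u u1 u2 : reach U u u1 -> u1 = u2 -> reach U u u2.
Proof. intros H <-; exact H. Qed.

Lemma reach_scale U u u1 c : reach U u (vscale c u1) -> 0 < c -> reach U u u1.
Proof.
  intros H Hc p. destruct (H p) as [ws [F [p' E]]]. exists ws; split; auto.
  exists p'. rewrite E, normalize_scale by exact Hc. reflexivity.
Qed.

Lemma rA U (HU : 0 < U) a b c t : reach U (a,b,c) (a + t * c, b, c).
Proof. exact (moveA U HU t (a,b,c)). Qed.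
Lemma rBy U (HU : 0 < U) a b c t : reach U (a,b,c) (a, b + t * a, c).
Proof. exact (moveBy U HU t (a,b,c)). Qed.
Lemma rBz U (HU : 0 < U) a b c t : reach U (a,b,c) (a, b, c + t * a).
Proof. exact (moveBz U HU t (a,b,c)). Qed.
Lemma rC U (HU : 0 < U) a b c t : reach U (a,b,c) (a - t * b, b, c).
Proof. exact (moveC U HU t (a,b,c)). Qed.

Lemma reach_step U u u1 u2 u3 : reach U u u1 -> u1 = u2 -> reach U u2 u3 -> reach U u u3.
Proof. intros H1 <- H2. exact (reach_trans U _ _ _ H1 H2). Qed.

Lemma sq1 a : a^2 + 0^2 + 0^2 = 1 -> a = 1 \/ a = -1.
Proof.
  intro H. assert (E : (a - 1) * (a + 1) = 0) by nra.
  apply Rmult_integral in E. lra.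
Qed.

Lemma reach_pos U (HU : 0 < U) a b c : norm3 (a,b,c) = 1 ->
  exists a' b' c', 0 < a' /\ reach U (a,b,c) (a',b',c').
Proof.
  intro Hn. destruct (Rlt_dec 0 a) as [Ha|Ha].
  { exists a, b, c; split; auto. apply reach_refl. }
  destruct (Req_dec b 0) as [Hb|Hb].
  2:{ exists 1, b, c; split; [lra|].
      apply (reach_step U _ _ (1,b,c) _ (rC U HU a b c ((a - 1) / b))).
      - apply triple_eq; [field; exact Hb|reflexivity|reflexivity].
      - apply reach_refl. }
  destruct (Req_dec c 0) as [Hc|Hc].
  2:{ exists 1, b, c; split; [lra|].
      apply (reach_step U _ _ (1,b,c) _ (rA U HU a b c ((1 - a) / c))).
      - apply triple_eq; [field; exact Hc|reflexivity|reflexivity].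
      - apply reach_refl. }
  subst b c. apply norm3_sq, sq1 in Hn.
  assert (Ha0 : a <> 0) by lra.
  exists 1, a, 0; split; [lra|].
  apply (reach_step U _ _ (a, a, 0) _ (rBy U HU a 0 0 1)).
  - apply triple_eq; ring.
  - apply (reach_step U _ _ (1,a,0) _ (rC U HU a a 0 ((a - 1) / a))).
    + apply triple_eq; [field; exact Ha0|reflexivity|reflexivity].
    + apply reach_refl.
Qed.

Lemma reach_e1 U (HU : 0 < U) a b c : 0 < a -> reach U (a,b,c) (1,0,0).
Proof.
  intro Ha.
  apply (reach_step U _ _ (a, 0, c) _ (rBy U HU a b c (- b / a))).
  { apply triple_eq; [reflexivity|field; lra|reflexivity]. }
  apply (reach_step U _ _ (a, 0, 0) _ (rBz U HU a 0 c (- c / a))).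
  { apply triple_eq; [reflexivity|reflexivity|field; lra]. }
  apply (reach_scale U _ _ a); [|exact Ha].
  apply (reach_eq U _ _ _ (reach_refl U _)).
  unfold vscale; cbn [coord]. apply triple_eq; ring.
Qed.

Lemma norm_e1 : norm3 (1,0,0) = 1.
Proof.
  unfold norm3; cbn [coord]. replace (1 ^ 2 + 0 ^ 2 + 0 ^ 2) with 1 by ring. apply sqrt_1.
Qed.

Lemma reach_from_e1 U (HU : 0 < U) a b c : norm3 (a,b,c) = 1 ->
  reach U (1,0,0) (a,b,c).
Proof.
  intro Hn.
  destruct (Req_dec b 0) as [Hb|Hb].
  2:{ apply (reach_step U _ _ (1, b, 0) _ (rBy U HU 1 0 0 b)).
      { apply triple_eq; ring. }
      apply (reach_step U _ _ (1, b, c) _ (rBz U HU 1 b 0 c)).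
      { apply triple_eq; ring. }
      apply (reach_step U _ _ (a, b, c) _ (rC U HU 1 b c ((1 - a) / b))).
      { apply triple_eq; [field; exact Hb|reflexivity|reflexivity]. }
      apply reach_refl. }
  subst b.
  destruct (Req_dec c 0) as [Hc|Hc].
  2:{ apply (reach_step U _ _ (1, 0, c) _ (rBz U HU 1 0 0 c)).
      { apply triple_eq; ring. }
      apply (reach_step U _ _ (a, 0, c) _ (rA U HU 1 0 c ((a - 1) / c))).
      { apply triple_eq; [field; exact Hc|reflexivity|reflexivity]. }
      apply reach_refl. }
  subst c. apply norm3_sq, sq1 in Hn. destruct Hn as [-> | ->].
  - apply reach_refl.
  - apply (reach_step U _ _ (1, 1, 0) _ (rBy U HU 1 0 0 1)).
    { apply triple_eq; ring. }
    apply (reach_step U _ _ (-1, 1, 0) _ (rC U HU 1 1 0 2)).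
    { apply triple_eq; ring. }
    apply (reach_step U _ _ (-1, 0, 0) _ (rBy U HU (-1) 1 0 1)).
    { apply triple_eq; ring. }
    apply reach_refl.
Qed.

Theorem lemma3p3 (U : R) (HU : 0 < U) (x v : vec) (Hv : norm3 v = 1) :
  (exists ws : list omega,
      Forall (in_Omega0 U) ws /\ snd (run ws (x, v)) = (1, 0, 0)) /\
  (v = (1, 0, 0) ->
   forall vb : vec, norm3 vb = 1 ->
   exists ws : list omega,
      Forall (in_Omega0 U) ws /\ snd (run ws (x, v)) = vb).
Proof.
  split.
  - destruct v as [[a b] c].
    destruct (reach_pos U HU a b c Hv) as [a' [b' [c' [Ha' R1]]]].
    pose proof (reach_trans U _ _ _ R1 (reach_e1 U HU a' b' c' Ha')) as R.
    destruct (R x) as [ws [F [p' E]]].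
    exists ws; split; [exact F|].
    rewrite normalize_unit in E by exact Hv. rewrite E. simpl.
    apply normalize_unit, norm_e1.
  - intros -> [[a b] c] Hvb.
    destruct (reach_from_e1 U HU a b c Hvb x) as [ws [F [p' E]]].
    exists ws; split; [exact F|].
    rewrite normalize_unit in E by exact norm_e1. rewrite E. simpl.
    apply normalize_unit, Hvb.
Qed.
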